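(* Let $G_N$ be the Poissonian random graph with capacities $\lambda_1,\dots,\lambda_N$, and let $A_1\ne A_2$ be two distinct nodes. Fix integers $k,t\ge0$. Conditionally on $\mathcal N^{(1)}_k$ and $\mathcal N^{(2)}_t$ and given that $\mathcal N^{(1)}_k\cap\mathcal N^{(2)}_t=\emptyset$, the number of edges between the nodes of $\partial\mathcal N^{(1)}_k$ and the nodes of $\partial\mathcal N^{(2)}_t$ is Poisson distributed with mean $$\frac{\underline C^{(1)}_{k+1}\,\underline C^{(2)}_{t+1}}{l_N},\qquad\text{where } \underline C^{(1)}_{k+1}=\sum_{i\in\partial\mathcal N^{(1)}_k}\lambda_i,\ \ \underline C^{(2)}_{t+1}=\sum_{j\in\partial\mathcal N^{(2)}_t}\lambda_j.$$
   Context: Poissonian random graph: on nodes $\{1,\dots,N\}$ with capacities $\lambda_i>0$ and $l_N=\sum_i\lambda_i$, the numbers of edges $E_{ij}$ between distinct nodes $i,j$ are independent Poisson random variables with mean $\lambda_i\lambda_j/l_N$ (multiple edges allowed). For a node $A_i$, $\partial\mathcal N^{(i)}_k=\{j: d(A_i,j)=k\}$ and $\mathcal N^{(i)}_k=\{j: d(A_i,j)\le k\}$, with $d$ the graph distance. *)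

(* Defs.v *)
From HB Require Import structures.
From mathcomp Require Import all_boot all_order all_algebra.
From mathcomp Require Import all_classical all_reals all_analysis.
Set Implicit Arguments. Unset Strict Implicit. Unset Printing Implicit Defensive.
Import Order.TTheory GRing.Theory Num.Theory.
Local Open Scope classical_set_scope.
Local Open Scope ring_scope.

(* Poisson probability mass function with mean mu >= 0 (mu = 0 gives the
   Dirac mass at 0, since 0 ^+ 0 = 1). *)
Definition poisson_mass {R : realType} (mu : R) (n : nat) : R :=
  mu ^+ n / n`!%:R * expR (- mu).

Definition adjacent (N : nat) (E : 'I_N -> 'I_N -> nat) (i j : 'I_N) : bool :=
  (i != j) && (0 < E i j)%N.

(* nbhd_ball E a k = N_k^{(a)} = { j : d(a, j) <= k } (graph distance). *)
Fixpoint nbhd_ball (N : nat) (E : 'I_N -> 'I_N -> nat) (a : 'I_N) (k : nat)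
  : {set 'I_N} :=
  match k with
  | 0 => [set a]
  | k'.+1 => nbhd_ball E a k' :|: [set j | [exists i in nbhd_ball E a k', adjacent E i j]]
  end.

(* shell B k = B k \ B (k-1) for a sequence of balls B, with shell B 0 = B 0.
   For B = nbhd_ball E a this is  dN_k^{(a)} = { j : d(a, j) = k }. *)
Definition shell (N : nat) (B : nat -> {set 'I_N}) (k : nat) : {set 'I_N} :=
  match k with
  | 0 => B 0
  | k'.+1 => B k'.+1 :\: B k'
  end.

Definition poissonian_graph {d : measure_display} {T : measurableType d}
  {R : realType} (P : probability T R) (N : nat) (lam : 'I_N -> R)
  (E : 'I_N -> 'I_N -> T -> nat) : Prop :=
  [/\ (forall (i j : 'I_N) x, E i j x = E j i x),
      (forall (i j : 'I_N) (n : nat), measurable [set x | E i j x = n]),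
      (forall (i j : 'I_N) (n : nat), (i < j)%N ->
         P [set x | E i j x = n] =
         (poisson_mass (lam i * lam j / \sum_(l < N) lam l) n)%:E) &
      (forall (S : {set 'I_N * 'I_N}) (n : 'I_N * 'I_N -> nat),
         (forall p, p \in S -> (p.1 < p.2)%N) ->
         P [set x | forall p, p \in S -> E p.1 p.2 x = n p] =
         (\prod_(p in S) P [set x | E p.1 p.2 x = n p])%E)].

Definition cond_prob {d : measure_display} {T : measurableType d}
  {R : realType} (P : probability T R) (A B : set T) : R :=
  fine (P (A `&` B)) / fine (P B).

(* Main.v *)
Require Import Defs.
From HB Require Import structures.
From mathcomp Require Import all_boot all_order all_algebra.
From mathcomp Require Import all_classical all_reals all_analysis.
From mathcomp Require Import ring lra.
Set Implicit Arguments. Unset Strict Implicit. Unset Printing Implicit Defensive.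
Import Order.TTheory GRing.Theory Num.Theory.
Local Open Scope classical_set_scope.
Local Open Scope ring_scope.

Lemma poisson0 (R : realType) : poisson_mass (0 : R) 0 = 1.
Proof. by rewrite /poisson_mass expr0 oppr0 expR0 fact0 divr1 mulr1. Qed.

Lemma poisson0n (R : realType) n : (0 < n)%N -> poisson_mass (0 : R) n = 0.
Proof. by case: n => // n _; rewrite /poisson_mass expr0n /= mul0r mul0r. Qed.

Lemma poisson_conv (R : realType) (a b : R) n :
  \sum_(m < n.+1) poisson_mass a (n - m) * poisson_mass b m = poisson_mass (a + b) n.
Proof.
rewrite /poisson_mass exprDn opprD expRD.
rewrite mulr_suml big_distrl /=; apply: eq_bigr => [[m hm]] _ /=; rewrite ltnS in hm.
have hf : (n`!%:R : R) = ('C(n, m))%:R * (m`!%:R * (n - m)`!%:R).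
  by rewrite -!natrM bin_fact.
rewrite hf -[_ *+ 'C(n, m)]mulr_natr.
have h1 : (m`!%:R : R) != 0 by rewrite pnatr_eq0 -lt0n fact_gt0.
have h2 : ((n - m)`!%:R : R) != 0 by rewrite pnatr_eq0 -lt0n fact_gt0.
have h3 : ('C(n, m)%:R : R) != 0 by rewrite pnatr_eq0 -lt0n bin_gt0.
by field; rewrite h1 h2 h3.
Qed.
Section Main.
Variables (d : measure_display) (T : measurableType d) (R : realType)
  (P : probability T R) (N : nat) (lam : 'I_N -> R)
  (E : 'I_N -> 'I_N -> T -> nat).
Hypothesis Hg : poissonian_graph P lam E.

Definition Pr (A : set T) : R := fine (P A).
Definition mu (p : 'I_N * 'I_N) : R := lam p.1 * lam p.2 / \sum_(l < N) lam l.

Lemma PrE A : measurable A -> P A = (Pr A)%:E.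
Proof. by move=> mA; rewrite /Pr fineK // fin_num_measure. Qed.

Lemma PrU A B : measurable A -> measurable B -> A `&` B = set0 ->
  Pr (A `|` B) = Pr A + Pr B.
Proof.
move=> mA mB AB; rewrite /Pr measureU // fineD //; exact: fin_num_measure.
Qed.

Lemma Pr0 : Pr set0 = 0.
Proof. by rewrite /Pr measure0. Qed.

Lemma PrD A B : measurable A -> measurable B -> B `<=` A ->
  Pr (A `\` B) = Pr A - Pr B.
Proof.
move=> mA mB BA.
have -> : Pr A = Pr ((A `\` B) `|` B).
  by rewrite setDKU.
rewrite PrU //; first by rewrite addrK.
  exact: measurableD.
by rewrite setDKI.
Qed.

Lemma mE (p : 'I_N * 'I_N) n : measurable [set x | E p.1 p.2 x = n].
Proof. by case: Hg => _ h _ _; apply: h. Qed.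

Lemma fset_ind (U : finType) (Q : {set U} -> Prop) :
  Q finset.set0 -> (forall (p : U) (A : {set U}), p \notin A -> Q A -> Q (p |: A)) -> forall A, Q A.
Proof.
move=> h0 hS A; move: {2}#|A| (erefl #|A|) => n; elim: n A => [|n IH] A hA.
  by move/eqP: hA; rewrite cards_eq0 => /eqP ->.
case: (set_0Vmem A) => [A0|[p pA]]; first by rewrite A0 cards0 in hA.
rewrite -(finset.setD1K pA); apply: hS; first by rewrite !inE eqxx.
by apply: IH; move: hA; rewrite (cardsD1 p A) pA add1n => -[].
Qed.

Definition Ev (U : {set 'I_N * 'I_N}) (D : 'I_N * 'I_N -> option nat) : set T :=
  [set x | forall p, p \in U -> match D p with
     | Some m => E p.1 p.2 x = m | None => (0 < E p.1 p.2 x)%N end].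

Definition cnd (D : 'I_N * 'I_N -> option nat) p : set T :=
  [set x | match D p with
     | Some m => E p.1 p.2 x = m | None => (0 < E p.1 p.2 x)%N end].

Lemma Ev0 D : Ev finset.set0 D = setT.
Proof. by apply/seteqP; split => x //= _ p; rewrite inE. Qed.

Lemma EvU p U D : Ev (p |: U) D = cnd D p `&` Ev U D.
Proof.
apply/seteqP; split => x /=.
  by move=> h; split; [apply: h; rewrite !inE eqxx | move=> q qU; apply: h; rewrite !inE qU orbT].
by move=> [h1 h2] q; rewrite !inE => /orP[/eqP->|]; [exact: h1 | exact: h2].
Qed.

Lemma mcnd D p : measurable (cnd D p).
Proof.
rewrite /cnd; case: (D p) => [m|]; first exact: mE.
have -> : [set x | (0 < E p.1 p.2 x)%N] = ~` [set x | E p.1 p.2 x = 0%N].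
  by apply/seteqP; split => x /=; rewrite lt0n => /eqP.
exact/measurableC/mE.
Qed.

Lemma mEv U D : measurable (Ev U D).
Proof.
elim/fset_ind: U => [|p U _ IH]; first by rewrite Ev0.
by rewrite EvU; apply: measurableI => //; exact: mcnd.
Qed.


Definition fD (D : 'I_N * 'I_N -> option nat) p : R :=
  match D p with Some m => poisson_mass (mu p) m | None => 1 - poisson_mass (mu p) 0 end.

Definition cnt (U : {set 'I_N * 'I_N}) (D : 'I_N * 'I_N -> option nat) :=
  #|[set p in U | D p == None]|.

Lemma PE (p : 'I_N * 'I_N) m : (p.1 < p.2)%N -> P [set x | E p.1 p.2 x = m] = (poisson_mass (mu p) m)%:E.
Proof. by case: Hg => _ _ h _ hp; rewrite h. Qed.

Lemma F1base (U : {set 'I_N * 'I_N}) (D : 'I_N * 'I_N -> option nat) : [set p in U | D p == None] = finset.set0 ->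
  (forall p, p \in U -> (p.1 < p.2)%N) -> Pr (Ev U D) = \prod_(p in U) fD D p.
Proof.
move=> h0 hU.
have hS : forall p, p \in U -> D p = Some (odflt 0%N (D p)).
  move=> p pU; case hp: (D p) => [m|] //.
  by have := finset.in_set0 p; rewrite -h0 inE pU hp.
have -> : Ev U D = [set x | forall p, p \in U -> E p.1 p.2 x = odflt 0%N (D p)].
  apply/seteqP; split => x /= h p pU; have := h p pU; by rewrite (hS p pU).
case: Hg => _ _ _ hind; rewrite /Pr hind //.
rewrite (eq_bigr (fun p => (fD D p)%:E)); first by rewrite prodEFin.
by move=> p pU; rewrite PE ?hU // /fD (hS p pU).
Qed.

Definition upd (D : 'I_N * 'I_N -> option nat) q v :=
  fun p => if p == q then v else D p.

Lemma Ev_agree (U : {set 'I_N * 'I_N}) (D D' : 'I_N * 'I_N -> option nat) : (forall p, p \in U -> D p = D' p) -> Ev U D = Ev U D'.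
Proof.
move=> h; apply/seteqP; split => x /= H p pU; have := H p pU; by rewrite h.
Qed.

Lemma F1 n (U : {set 'I_N * 'I_N}) (D : 'I_N * 'I_N -> option nat) : (cnt U D <= n)%N ->
  (forall p, p \in U -> (p.1 < p.2)%N) -> Pr (Ev U D) = \prod_(p in U) fD D p.
Proof.
elim: n U D => [|n IH] U D hc hU; case: (set_0Vmem [set p in U | D p == None]) => [h0|[q]];
  try exact: F1base.
- by move=> qU; move: hc; rewrite leqn0 cards_eq0 => /eqP h; rewrite h inE in qU.
rewrite inE => /andP[qU /eqP Dq].
set D0 := upd D q (Some 0%N).
have agr : forall p, p \in U :\ q -> D0 p = D p.
  by move=> p; rewrite !inE /D0 /upd => /andP[/negbTE -> _].
have eU : U = q |: (U :\ q) by rewrite finset.setD1K.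
have eD : Ev U D = cnd D q `&` Ev (U :\ q) D by rewrite {1}eU EvU.
have eD0 : Ev U D0 = cnd D0 q `&` Ev (U :\ q) D by rewrite {1}eU EvU (Ev_agree agr).
have -> : Ev U D = Ev (U :\ q) D `\` Ev U D0.
  rewrite eD eD0; apply/seteqP; split => x /=.
    move=> [h1 h2]; split => //; case=> h3 _; rewrite /cnd Dq /= in h1.
    by rewrite /cnd /D0 /upd eqxx /= in h3; rewrite h3 in h1.
  move=> [h1 h2]; split => //; rewrite /cnd Dq /= lt0n; apply/negP => /eqP h3; apply: h2.
  by split => //; rewrite /cnd /D0 /upd eqxx /=.
have c1 : (cnt (U :\ q) D < cnt U D)%N.
  apply: proper_card; rewrite properE; apply/andP; split.
    by apply/fintype.subsetP => p; rewrite !inE => /andP[/andP[_ ->] ->].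
  apply/fintype.subsetPn; exists q; first by rewrite inE qU Dq.
  by rewrite !inE eqxx.
have c2 : (cnt U D0 < cnt U D)%N.
  apply: proper_card; rewrite properE; apply/andP; split.
    apply/fintype.subsetP => p; rewrite !inE /D0 /upd; case: ifP => [_ /andP[_ /eqP] //|_ //].
  apply/fintype.subsetPn; exists q; first by rewrite inE qU Dq.
  by rewrite !inE /D0 /upd eqxx; apply/negP => /andP[_ /eqP].
have hUq : forall p, p \in U :\ q -> (p.1 < p.2)%N by move=> p /setD1P[_ /hU].
rewrite PrD; first last.
- by move=> x; rewrite eD0 => -[].
- exact: mEv.
- exact: mEv.
have h1' : (cnt (U :\ q) D <= n)%N by rewrite -ltnS (leq_trans c1 hc).
have h2' : (cnt U D0 <= n)%N by rewrite -ltnS (leq_trans c2 hc).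
rewrite (IH _ D) // (IH _ D0) //.
rewrite (big_setD1 q qU) [in RHS](big_setD1 q qU) /=.
rewrite [\prod_(i in U :\ q) fD D0 i](eq_bigr (fD D)); last by move=> p pU; rewrite /fD agr.
by rewrite /fD /D0 /upd eqxx Dq mulrBl mul1r.
Qed.

Lemma mUn K (A : nat -> set T) : (forall m, measurable (A m)) ->
  measurable [set x | exists2 m, (m < K)%N & A m x].
Proof.
move=> mA; elim: K => [|K IH].
  by have -> : [set x | exists2 m, (m < 0)%N & A m x] = set0 by
    apply/seteqP; split => x //= -[].
have -> : [set x | exists2 m, (m < K.+1)%N & A m x] =
   [set x | exists2 m, (m < K)%N & A m x] `|` A K.
  apply/seteqP; split => x /=.
    by move=> [m]; rewrite ltnS leq_eqVlt => /orP[/eqP->|h]; [right|left; exists m].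
  by move=> [[m h1 h2]|h]; [exists m => //; apply: ltnW|exists K].
exact: measurableU.
Qed.

Lemma PrUn K (A : nat -> set T) : (forall m, measurable (A m)) ->
  (forall m m', m != m' -> A m `&` A m' = set0) ->
  Pr [set x | exists2 m, (m < K)%N & A m x] = \sum_(m < K) Pr (A m).
Proof.
move=> mA dA; elim: K => [|K IH].
  have -> : [set x | exists2 m, (m < 0)%N & A m x] = set0 by
    apply/seteqP; split => x //= -[].
  by rewrite Pr0 big_ord0.
have -> : [set x | exists2 m, (m < K.+1)%N & A m x] =
   [set x | exists2 m, (m < K)%N & A m x] `|` A K.
  apply/seteqP; split => x /=.
    by move=> [m]; rewrite ltnS leq_eqVlt => /orP[/eqP->|h]; [right|left; exists m].
  by move=> [[m h1 h2]|h]; [exists m => //; apply: ltnW|exists K].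
rewrite PrU ?IH ?big_ord_recr //; first exact: mUn.
apply/seteqP; split => x // [[m h1 h2] h3].
have := dA m K; rewrite neq_ltn h1 => /(_ isT) h.
by have : (A m `&` A K) x by []; rewrite h.
Qed.

Definition Sm (S : {set 'I_N * 'I_N}) x := (\sum_(p in S) E p.1 p.2 x)%N.
Definition muS (S : {set 'I_N * 'I_N}) := \sum_(p in S) mu p.

Lemma upd_agree (U : {set 'I_N * 'I_N}) D p v : p \notin U ->
  forall q, q \in U -> upd D p v q = D q.
Proof. by move=> pU q qU; rewrite /upd; case: eqP => // eq; rewrite -eq qU in pU. Qed.

Lemma SumEv_split (S U : {set 'I_N * 'I_N}) D p n : p \notin S -> p \notin U ->
  [set x | Sm (p |: S) x = n] `&` Ev U D =
  [set x | exists2 m, (m < n.+1)%N &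
     ([set x | Sm S x = (n - m)%N] `&` Ev (p |: U) (upd D p (Some m))) x].
Proof.
move=> pS pU.
apply/seteqP; split => x /=.
  rewrite /Sm big_setU1 //= => -[h1 h2]; exists (E p.1 p.2 x).
    by rewrite ltnS -h1 leq_addr.
  rewrite EvU (Ev_agree (upd_agree _ _ pU)).
  by split => //; [rewrite -h1 addKn | split => //; rewrite /cnd /upd eqxx /=].
move=> [m hm [h1]]; rewrite EvU (Ev_agree (upd_agree _ _ pU)) => -[h2 h3]; split => //.
rewrite /cnd /upd eqxx /= in h2.
by rewrite /Sm big_setU1 //= h2 -/(Sm S x) h1 subnKC // -ltnS.
Qed.

Lemma mSum (S : {set 'I_N * 'I_N}) n : measurable [set x | Sm S x = n].
Proof.
elim/fset_ind: S n => [|p S pS IH] n.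
  rewrite /Sm; under eq_set do rewrite big_set0.
  by case: n => [|n]; [rewrite (_ : [set _ | _] = setT) //; apply/seteqP; split|
    rewrite (_ : [set _ | _] = set0) //; apply/seteqP; split].
have p0 : p \notin (finset.set0 : {set 'I_N * 'I_N}) by rewrite finset.in_set0.
have := SumEv_split (fun _ => None) n pS p0.
rewrite Ev0 setIT => ->; apply: mUn => m; apply: measurableI => //; exact: mEv.
Qed.

Lemma K (S : {set 'I_N * 'I_N}) n (U : {set 'I_N * 'I_N}) D :
  (forall q, q \in S -> q \notin U) ->
  (forall p, p \in S -> (p.1 < p.2)%N) -> (forall p, p \in U -> (p.1 < p.2)%N) ->
  Pr ([set x | Sm S x = n] `&` Ev U D) = poisson_mass (muS S) n * \prod_(p in U) fD D p.
Proof.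
elim/fset_ind: S n U D => [|p S pS IH] n U D hSU hS hU.
  rewrite /muS big_set0 /Sm; under eq_set do rewrite big_set0.
  case: n => [|n].
    rewrite (_ : [set _ | _] = setT); last by apply/seteqP; split.
    by rewrite setTI poisson0 mul1r (F1 (leqnn _)).
  rewrite (_ : [set _ | _] = set0); last by apply/seteqP; split.
  by rewrite set0I Pr0 poisson0n // mul0r.
have pU : p \notin U by apply: hSU; rewrite !inE eqxx.
rewrite SumEv_split // PrUn; first last.
- move=> m m' hmm'; apply/seteqP; split => x // [[_ e1] [_ e2]].
  rewrite EvU in e1; rewrite EvU in e2; case: e1 => h1 _; case: e2 => h2 _.
  rewrite /cnd /upd eqxx /= in h1 h2.
  by move: hmm'; rewrite -h1 -h2 eqxx.
- by move=> m; apply: measurableI; [exact: mSum | exact: mEv].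
have hU' : forall q, q \in p |: U -> (q.1 < q.2)%N.
  by move=> q; rewrite !inE => /orP[/eqP->|/hU //]; apply: hS; rewrite !inE eqxx.
have hSU' : forall q, q \in S -> q \notin p |: U.
  move=> q qS; rewrite !inE negb_or hSU ?andbT; last by rewrite !inE qS orbT.
  by apply/eqP => eq; move: pS; rewrite -eq qS.
have hS' : forall q, q \in S -> (q.1 < q.2)%N by move=> q qS; apply: hS; rewrite !inE qS orbT.
rewrite (eq_bigr (fun m : 'I_n.+1 => poisson_mass (muS S) (n - m) *
    poisson_mass (mu p) m * \prod_(q in U) fD D q)); last first.
  move=> m _; rewrite IH // big_setU1 //= /fD /upd eqxx -!/(fD _ _) -mulrA; congr (_ * (_ * _)).
  apply: eq_bigr => q qU; have := upd_agree D (Some (nat_of_ord m)) pU qU; rewrite /upd => ->; done.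
by rewrite -big_distrl /= poisson_conv /muS big_setU1 //= addrC.
Qed.

Definition pat (W : {set 'I_N * 'I_N}) x := [set q in W | (0 < E q.1 q.2 x)%N].
Definition Phs (W : {set 'I_N * 'I_N}) (Phi : {set 'I_N * 'I_N} -> Prop) : set T :=
  [set x | Phi (pat W x)].

Lemma pat0 x : pat finset.set0 x = finset.set0.
Proof. by apply/setP => q; rewrite !inE. Qed.

Lemma pat_split (W : {set 'I_N * 'I_N}) q x : q \notin W ->
  pat (q |: W) x = if (0 < E q.1 q.2 x)%N then q |: pat W x else pat W x.
Proof.
move=> qW; apply/setP => r; rewrite !inE; case: ifP => h; rewrite !inE.
  by case: eqP => [->|]; rewrite ?h.
by case: eqP => [->|] //=; rewrite h andbF.
Qed.

Lemma Phs0 Phi : Phs finset.set0 Phi = if pselect (Phi finset.set0) then setT else set0.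
Proof.
case: pselect => h; apply/seteqP; split => x //=; rewrite /Phs /= pat0 //.
Qed.

Lemma Phs_split (W : {set 'I_N * 'I_N}) q Phi : q \notin W ->
  Phs (q |: W) Phi = ([set x | E q.1 q.2 x = 0%N] `&` Phs W Phi) `|`
    ([set x | (0 < E q.1 q.2 x)%N] `&` Phs W (fun b => Phi (q |: b))).
Proof.
move=> qW; apply/seteqP; split => x; rewrite /Phs /= pat_split //.
  by case: ifP => h; [right | left; move/negbT: h; rewrite lt0n negbK => /eqP].
by case=> -[h1 h2]; [rewrite h1 | rewrite h1].
Qed.

Lemma mPhs (W : {set 'I_N * 'I_N}) Phi : measurable (Phs W Phi).
Proof.
elim/fset_ind: W Phi => [|q W qW IH] Phi.
  by rewrite Phs0; case: pselect => hp; [exact: measurableT | exact: measurable0].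
rewrite Phs_split //; apply: measurableU; apply: measurableI => //.
  exact: mE.
have -> : [set x | (0 < E q.1 q.2 x)%N] = ~` [set x | E q.1 q.2 x = 0%N].
  by apply/seteqP; split => x /=; rewrite lt0n => /eqP.
exact/measurableC/mE.
Qed.

Lemma EvW_split (X : set T) (U W : {set 'I_N * 'I_N}) D q Phi : q \notin U -> q \notin W ->
  X `&` Ev U D `&` Phs (q |: W) Phi =
  (X `&` Ev (q |: U) (upd D q (Some 0%N)) `&` Phs W Phi) `|`
  (X `&` Ev (q |: U) (upd D q None) `&` Phs W (fun b => Phi (q |: b))).
Proof.
move=> qU qW; rewrite Phs_split // !EvU !(Ev_agree (upd_agree _ _ qU)).
rewrite /cnd /upd eqxx /=.
apply/seteqP; split => x /=.
  by move=> [[hX hE] [[h1 h2]|[h1 h2]]]; [left|right].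
by move=> [[[hX [h1 hE]] h2]|[[hX [h1 hE]] h2]]; (split; [split|]) => //; [left|right].
Qed.

Lemma K2 (W : {set 'I_N * 'I_N}) Phi (S U : {set 'I_N * 'I_N}) D n :
  (forall q, q \in S -> q \notin U) -> (forall q, q \in W -> q \notin U) ->
  (forall q, q \in W -> q \notin S) ->
  (forall p, p \in S -> (p.1 < p.2)%N) -> (forall p, p \in U -> (p.1 < p.2)%N) ->
  (forall p, p \in W -> (p.1 < p.2)%N) ->
  Pr ([set x | Sm S x = n] `&` Ev U D `&` Phs W Phi) =
  poisson_mass (muS S) n * Pr (Ev U D `&` Phs W Phi).
Proof.
elim/fset_ind: W Phi U D => [|q W qW IH] Phi U D hSU hWU hWS hS hU hW.
  rewrite Phs0; case: pselect => hp; last by rewrite !setI0 Pr0 mulr0.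
  by rewrite !setIT K // (F1 (leqnn _)).
have qU : q \notin U by apply: hWU; rewrite !inE eqxx.
have qS : q \notin S by apply: hWS; rewrite !inE eqxx.
have hW' : forall p, p \in W -> (p.1 < p.2)%N by move=> p pW; apply: hW; rewrite !inE pW orbT.
have hU' : forall p, p \in q |: U -> (p.1 < p.2)%N.
  by move=> p; rewrite !inE => /orP[/eqP->|/hU //]; apply: hW; rewrite !inE eqxx.
have hWU' : forall p, p \in W -> p \notin q |: U.
  move=> p pW; rewrite !inE negb_or hWU ?andbT; last by rewrite !inE pW orbT.
  by apply/eqP => eq; move: qW; rewrite -eq pW.
have hSU' : forall p, p \in S -> p \notin q |: U.
  move=> p pS; rewrite !inE negb_or hSU ?andbT //.
  by apply/eqP => eq; move: qS; rewrite -eq pS.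
have hWS' : forall p, p \in W -> p \notin S by move=> p pW; apply: hWS; rewrite !inE pW orbT.
have mX : forall (X : set T) U' D' Phi', measurable X -> measurable (X `&` Ev U' D' `&` Phs W Phi').
  by move=> X U' D' Phi' mX; apply: measurableI; [apply: measurableI => //; exact: mEv | exact: mPhs].
have dX : forall (X : set T) Phi1 Phi2,
    (X `&` Ev (q |: U) (upd D q (Some 0%N)) `&` Phs W Phi1) `&`
    (X `&` Ev (q |: U) (upd D q None) `&` Phs W Phi2) = set0.
  move=> X Phi1 Phi2; apply/seteqP; split => x // [[[_ e1] _] [[_ e2] _]].
  rewrite EvU in e1; rewrite EvU in e2; case: e1 => h1 _; case: e2 => h2 _.
  by rewrite /cnd /upd eqxx /= in h1 h2; rewrite h1 in h2.
rewrite (EvW_split _ _ _ qU qW) PrU; [|exact: (mX _ _ _ _ (mSum _ _))..|exact: dX].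
rewrite -[Ev U D]setTI (EvW_split _ _ _ qU qW) PrU; [|exact: (mX _ _ _ _ measurableT)..|exact: dX].
by rewrite !setTI IH // IH // mulrDr.
Qed.
End Main.

Lemma ball_mono N (F : 'I_N -> 'I_N -> nat) a m m' : (m <= m')%N ->
  nbhd_ball F a m \subset nbhd_ball F a m'.
Proof.
elim: m' => [|m' IH]; first by rewrite leqn0 => /eqP ->.
rewrite leq_eqVlt => /orP[/eqP ->|]; first exact: subxx.
rewrite ltnS => /IH h; apply: (fintype.subset_trans h) => /=; exact: finset.subsetUl.
Qed.

Lemma ball_agree N (F G : 'I_N -> 'I_N -> nat) a m :
  (forall m', (m' < m)%N -> forall i j, i \in nbhd_ball G a m' ->
     Defs.adjacent F i j = Defs.adjacent G i j) ->
  nbhd_ball F a m = nbhd_ball G a m.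
Proof.
elim: m => [|m IH] H //=.
have e : nbhd_ball F a m = nbhd_ball G a m.
  by apply: IH => m' hm'; apply: H; apply: ltnW.
rewrite e; congr (_ :|: _); apply/setP => j; rewrite !inE.
apply: eq_existsb => i; case hi: (i \in nbhd_ball G a m) => //=.
by rewrite (H m (ltnSn m) i j hi).
Qed.

Lemma shell_sub N (B : nat -> {set 'I_N}) k : shell B k \subset B k.
Proof. by case: k => [|k] /=; [exact: subxx | exact: subsetDl]. Qed.

Lemma det_one N (F G : 'I_N -> 'I_N -> nat) a (B : nat -> {set 'I_N}) k :
  (forall m, (m <= k)%N -> nbhd_ball G a m = B m) ->
  (forall i j, i \in B k -> i \notin shell B k -> Defs.adjacent F i j = Defs.adjacent G i j) ->
  forall m, (m <= k)%N -> nbhd_ball F a m = B m.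
Proof.
move=> HG H m hm; rewrite -HG //; apply: ball_agree => m' hm' i j hi.
case: k HG H hm => [|k] HG H hm; first by move: (leq_trans hm' hm).
apply: H.
  rewrite -HG //; apply: (fintype.subsetP (ball_mono G a (m:=m') _)) => //.
  exact: leq_trans (ltnW hm') hm.
rewrite /= !inE negb_and negbK; apply/orP; left.
rewrite -HG; last exact: leqW.
apply: (fintype.subsetP (ball_mono G a (m:=m') _)) => //.
by rewrite -ltnS (leq_trans hm' hm).
Qed.

Definition fp N (ij : 'I_N * 'I_N) : 'I_N * 'I_N :=
  if (ij.1 < ij.2)%N then ij else (ij.2, ij.1).

Lemma fp_cases N (ij : 'I_N * 'I_N) : fp ij = ij \/ fp ij = (ij.2, ij.1).
Proof. by rewrite /fp; case: ifP; [left|right]. Qed.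

Lemma fp_eq N (a b : 'I_N * 'I_N) : fp a = fp b -> a = b \/ a = (b.2, b.1).
Proof.
case: a b => [a1 a2] [b1 b2].
by case: (fp_cases (a1, a2)) => ->; case: (fp_cases (b1, b2)) => -> /= [-> ->];
  [left|right|right|left].
Qed.

Lemma fp_lt N (i j : 'I_N) : i != j -> ((fp (i, j)).1 < (fp (i, j)).2)%N.
Proof.
move=> ij; rewrite /fp /=; case: ifP => //= /negbT; rewrite -leqNgt leq_eqVlt.
by case/orP => // /eqP/val_inj e; rewrite e eqxx in ij.
Qed.

Lemma fp_inj N (X Y : {set 'I_N}) : X :&: Y = finset.set0 ->
  {in finset.setX X Y &, injective (@fp N)}.
Proof.
move=> XY [a1 a2] [b1 b2]; rewrite !inE /= => /andP[a1X a2Y] /andP[b1X b2Y].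
case/fp_eq => // -[e1 e2].
have : a1 \in X :&: Y by rewrite inE a1X e1 b2Y.
by rewrite XY finset.in_set0.
Qed.

Lemma sum_reindex_nat N (X Y : {set 'I_N}) (F : 'I_N * 'I_N -> nat) :
  X :&: Y = finset.set0 -> (forall ij, F (fp ij) = F ij) ->
  (\sum_(i in X) \sum_(j in Y) F (i, j))%N = (\sum_(p in (@fp N @: finset.setX X Y)) F p)%N.
Proof.
move=> XY hF; rewrite big_imset /=; last exact: fp_inj.
rewrite pair_big /=; apply: eq_big => [[i j]|[i j] _]; first by rewrite !inE.
by rewrite hF.
Qed.

Lemma sum_reindex_R (R : realType) N (X Y : {set 'I_N}) (F : 'I_N * 'I_N -> R) :
  X :&: Y = finset.set0 -> (forall ij, F (fp ij) = F ij) ->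
  \sum_(i in X) \sum_(j in Y) F (i, j) = \sum_(p in (@fp N @: finset.setX X Y)) F p.
Proof.
move=> XY hF; rewrite big_imset /=; last exact: fp_inj.
rewrite pair_big /=; apply: eq_big => [[i j]|[i j] _]; first by rewrite !inE.
by rewrite hF.
Qed.

Lemma shell_eq N (B B' : nat -> {set 'I_N}) k :
  (forall m, (m <= k)%N -> B' m = B m) -> shell B' k = shell B k.
Proof. by case: k => [|k] h /=; rewrite !h. Qed.

Lemma pat_mem (T : Type) N (E : 'I_N -> 'I_N -> T -> nat) (W : {set 'I_N * 'I_N}) q x :
  q \in W -> (q \in [set q in W | (0 < E q.1 q.2 x)%N]) = (0 < E q.1 q.2 x)%N.
Proof. by move=> qW; rewrite finset.in_set qW. Qed.

Unset Implicit Arguments.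

Theorem lemma3p3 (d : measure_display) (T : measurableType d) (R : realType)
  (P : probability T R) (N : nat) (lam : 'I_N -> R)
  (E : 'I_N -> 'I_N -> T -> nat) (A1 A2 : 'I_N) (k t : nat)
  (B1 B2 : nat -> {set 'I_N}) :
  (forall i, 0 < lam i) ->
  poissonian_graph P lam E ->
  A1 != A2 ->
  (* the conditioning event: N^{(1)}_m = B1 m for m <= k and
     N^{(2)}_m = B2 m for m <= t *)
  let Ev := [set x | (forall m, (m <= k)%N -> nbhd_ball (fun i j => E i j x) A1 m = B1 m)
                  /\ (forall m, (m <= t)%N -> nbhd_ball (fun i j => E i j x) A2 m = B2 m)] in
  B1 k :&: B2 t = finset.set0 ->
  (0 < P Ev)%E ->
  forall n : nat,
    cond_prob P
      [set x | (\sum_(i in shell (nbhd_ball (fun i j => E i j x) A1) k)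
                 \sum_(j in shell (nbhd_ball (fun i j => E i j x) A2) t) E i j x)%N = n]
      Ev
    = poisson_mass ((\sum_(i in shell B1 k) lam i) * (\sum_(j in shell B2 t) lam j)
                      / \sum_(l < N) lam l) n.
Proof.
move=> hlam Hg A12 EvT BB PEv n.
have d12 : shell B1 k :&: shell B2 t = finset.set0.
  apply/setP => i; rewrite !inE; apply/negP => /andP[h1 h2].
  have : i \in B1 k :&: B2 t.
    by rewrite inE (fintype.subsetP (shell_sub _ _) _ h1) (fintype.subsetP (shell_sub _ _) _ h2).
  by rewrite BB finset.in_set0.
set sh1 := shell B1 k in d12 *.
set sh2 := shell B2 t in d12 *.
set S := (@fp N @: finset.setX sh1 sh2).
set W := [set p : 'I_N * 'I_N | (p.1 < p.2)%N] :\: S.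
have Esym : forall i j x, E i j x = E j i x by case: Hg.
have EF : forall x ij, E (fp ij).1 (fp ij).2 x = E ij.1 ij.2 x.
  by move=> x ij; case: (fp_cases ij) => ->.
have hsum : forall x, (\sum_(i in sh1) \sum_(j in sh2) E i j x)%N = Sm E S x.
  by move=> x; rewrite /Sm (sum_reindex_nat (F := fun p => E p.1 p.2 x)).
have hmu : (\sum_(i in sh1) lam i) * (\sum_(j in sh2) lam j) / \sum_(l < N) lam l
    = muS lam S.
  rewrite /muS -(sum_reindex_R (F := mu lam)) //; last first.
    by move=> ij; case: (fp_cases ij) => ->; rewrite /mu /= // [lam ij.2 * _]mulrC.
  rewrite -mulrA big_distrl /=; apply: eq_bigr => i _.
  rewrite mulrA big_distrr big_distrl /=; apply: eq_bigr => j _ //.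
have ordS : forall p, p \in S -> (p.1 < p.2)%N.
  move=> p /imsetP [[i j] hij ->]; apply: fp_lt; apply/eqP => e.
  move: hij; rewrite !inE /= e => /andP[h1 h2].
  have : j \in sh1 :&: sh2 by rewrite inE h1 h2.
  by rewrite d12 finset.in_set0.
have ordW : forall p, p \in W -> (p.1 < p.2)%N by move=> p; rewrite !inE => /andP[_].
have WS : forall p, p \in W -> p \notin S by move=> p; rewrite !inE => /andP[].
pose Phi := fun b => exists2 y, EvT y & pat E W y = b.
have EvP : EvT = Phs E W Phi.
  apply/seteqP; split => x; first by move=> hx; exists x.
  move=> [y hy hpat].
  have hag : forall i j, ~~ ((i \in sh1) && (j \in sh2) || (i \in sh2) && (j \in sh1)) ->
      Defs.adjacent (fun i j => E i j x) i j = Defs.adjacent (fun i j => E i j y) i j.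
    move=> i j hc; rewrite /Defs.adjacent; case: (eqVneq i j) => //= ij.
    have pW : fp (i, j) \in W.
      rewrite !inE fp_lt // andbT; apply/imsetP => -[[a b] hab e].
      case: (fp_eq e) => -[ei ej]; move: hab hc; rewrite !inE /= ei ej => /andP[h1 h2];
        by rewrite h1 h2 /= ?orbT.
    have := congr1 (fun s : {set 'I_N * 'I_N} => fp (i, j) \in s) hpat; rewrite /= /pat !pat_mem // !EF /= => ->.
    done.
  case: hy => hy1 hy2; split.
    apply: (det_one hy1) => i j hi hni; apply: hag.
    rewrite -/sh1 (negbTE hni) /=; apply/negP => /andP[h2 _].
    have : i \in B1 k :&: B2 t by rewrite inE hi (fintype.subsetP (shell_sub _ _) _ h2).
    by rewrite BB finset.in_set0.
  apply: (det_one hy2) => i j hi hni; apply: hag.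
  rewrite -/sh2 (negbTE hni) /= ?andbF ?orbF; apply/negP => /andP[h1 _].
  have : i \in B1 k :&: B2 t by rewrite inE hi (fintype.subsetP (shell_sub _ _) _ h1).
  by rewrite BB finset.in_set0.
have eA : [set x | (\sum_(i in shell (nbhd_ball (fun i j => E i j x) A1) k)
                 \sum_(j in shell (nbhd_ball (fun i j => E i j x) A2) t) E i j x)%N = n]
      `&` EvT = [set x | Sm E S x = n] `&` Ev E finset.set0 (fun _ => None) `&` Phs E W Phi.
  rewrite Ev0 setIT -EvP; apply/seteqP; split => x [h1 h2]; split => //=.
    by rewrite -hsum -h1 /= (shell_eq h2.1) (shell_eq h2.2).
  by rewrite /= (shell_eq h2.1) (shell_eq h2.2) hsum.
rewrite /cond_prob eA.
have := K2 (S := S) (U := finset.set0) (W := W) Hg Phi (fun _ => None) n.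
rewrite /Pr => ->; first last.
- by [].
- by move=> p; rewrite finset.in_set0.
- by [].
- by [].
- by move=> q; rewrite finset.in_set0.
- by move=> q; rewrite finset.in_set0.
rewrite Ev0 setTI -EvP hmu.
have mEvT : measurable EvT by rewrite EvP; exact: (mPhs Hg).
have : (0 < fine (P EvT)).
  by apply: fine_gt0; rewrite PEv (PrE P mEvT) ltry.
move=> hpos; rewrite -mulrA mulfV ?mulr1 //; exact: lt0r_neq0.
Qed.
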